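(* Let $\mu>0$, let $G$ be an $n$-vertex graph and let $\mathcal{F}$ be a $\mu n$-bounded incompatibility system over $G$. Then: (i) For every path $P$ in $G$, there are at most $\sqrt{\mu}\,n$ vertices of $G$ that are $2\sqrt{\mu}$-bad for $P$; the same holds for every cycle $C$ in $G$. (ii) For every vertex $v$, there are at most $\sqrt{\mu}\,n$ vertices that are $\sqrt{\mu}$-correlated with $v$.
   Context: All graphs are finite and simple. An incompatibility system $\mathcal{F}$ over $G=(V,E)$ is a family $\{F_v\}_{v\in V}$ where each $F_v$ is a set of unordered pairs $\{e,e'\}$ of distinct edges with $e\cap e'=\{v\}$; edges $e,e'$ are incompatible if $\{e,e'\}\in F_v$ for some $v$, compatible otherwise. For a positive real $\Delta$, $\mathcal{F}$ is $\Delta$-bounded if for every vertex $v$ and edge $e\ni v$, at most $\Delta$ other edges $e'\ni v$ satisfy $\{e,e'\}\in F_v$. For a path $P=(v_0,\dots,v_\ell)$, $|P|$ denotes its number of vertices. For a vertex $w$ (not necessarily on $P$), a vertex $v_i\in V(P)$ adjacent to $w$ is a bad neighbor of $w$ in $P$ if the edge $\{w,v_i\}$ is incompatible with $\{v_i,v_{i-1}\}$ or with $\{v_i,v_{i+1}\}$ (for those of these that are edges of $P$); otherwise it is a good neighbor. For $\gamma>0$, $w$ is $\gamma$-bad for $P$ if it has at least $\gamma|P|$ bad neighbors in $P$, and $\gamma$-good otherwise. The same notions are defined for cycles (indices taken cyclically, $|C|$ the number of vertices). Two vertices $v_1,v_2$ are $\gamma$-correlated if there are at least $\gamma n$ vertices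 $w$ such that $\{v_1,w\}$ and $\{v_2,w\}$ are edges that are incompatible; otherwise they are $\gamma$-uncorrelated. *)

(* Defs.v *)
From mathcomp Require Import all_boot all_order all_algebra.
Set Implicit Arguments. Unset Strict Implicit. Unset Printing Implicit Defensive.
Import Order.TTheory GRing.Theory Num.Theory.
Local Open Scope ring_scope.

Definition simple_graph (T : finType) (e : rel T) : Prop :=
  symmetric e /\ irreflexive e.

(* An incompatibility system: F v x y  means that the edges {v,x} and {v,y}
   form a pair belonging to F_v.  Since two distinct edges meeting exactly in v
   determine v, this encodes the family {F_v}. *)
Definition incompat_system (T : finType) (e : rel T) (F : T -> T -> T -> bool) : Prop :=
  (forall v x y, F v x y -> [&& e v x, e v y & x != y]) /\
  (forall v x y, F v x y = F v y x).

Definition Delta_bounded (R : numDomainType) (T : finType) (e : rel T)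
  (F : T -> T -> T -> bool) (Delta : R) : Prop :=
  forall v x, e v x -> (#|[set y | F v x y]|%:R : R) <= Delta.

Definition is_gpath (T : finType) (e : rel T) (P : seq T) : Prop :=
  [/\ P != [::], uniq P & sorted e P].

Definition is_gcycle (T : finType) (e : rel T) (C : seq T) : Prop :=
  [/\ (3 <= size C)%N, uniq C & cycle e C].

Definition path_bad_nb (T : finType) (e : rel T) (F : T -> T -> T -> bool)
  (P : seq T) (w v : T) : bool :=
  let i := index v P in
  [&& v \in P, e w v &
    ((0 < i)%N && F v w (nth v P i.-1)) || ((i.+1 < size P)%N && F v w (nth v P i.+1))].

Definition cycle_bad_nb (T : finType) (e : rel T) (F : T -> T -> T -> bool)
  (C : seq T) (w v : T) : bool :=
  [&& v \in C, e w v & F v w (prev C v) || F v w (next C v)].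

Definition path_gamma_bad (R : numDomainType) (T : finType) (e : rel T)
  (F : T -> T -> T -> bool) (gamma : R) (P : seq T) (w : T) : bool :=
  gamma * (size P)%:R <= #|[set v | path_bad_nb e F P w v]|%:R.

Definition cycle_gamma_bad (R : numDomainType) (T : finType) (e : rel T)
  (F : T -> T -> T -> bool) (gamma : R) (C : seq T) (w : T) : bool :=
  gamma * (size C)%:R <= #|[set v | cycle_bad_nb e F C w v]|%:R.

Definition gamma_correlated (R : numDomainType) (T : finType) (e : rel T)
  (F : T -> T -> T -> bool) (gamma : R) (v1 v2 : T) : bool :=
  gamma * #|T|%:R <= #|[set w | [&& e v1 w, e v2 w & F w v1 v2]]|%:R.

(* Main.v *)
Require Import Defs.
From mathcomp Require Import all_boot all_order all_algebra.
From mathcomp Require Import ring.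
Import Order.TTheory GRing.Theory Num.Theory.
Local Open Scope ring_scope.
Set Implicit Arguments. Unset Strict Implicit.

Lemma card_as_sum (R : numDomainType) (T : finType) (D : {set T}) (b : pred T) :
  (forall v, b v -> v \in D) ->
  (#|[set v | b v]|%:R : R) = \sum_(v in D) (b v)%:R.
Proof.
move=> hD; rewrite -sum1_card natr_sum big_mkcond [RHS]big_mkcond /=.
apply: eq_bigr => v _; rewrite inE.
case hb: (b v); first by rewrite (hD _ hb).
by case: (v \in D).
Qed.

Lemma double_count (R : numDomainType) (T : finType) (S D : {set T})
  (B : T -> T -> bool) (g c : R) :
  (forall w v, B w v -> v \in D) ->
  (forall v, (#|[set w | B w v]|%:R : R) <= c) ->
  (forall w, w \in S -> g <= #|[set v | B w v]|%:R) ->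
  #|S|%:R * g <= #|D|%:R * c.
Proof.
move=> hD hc hg.
have e1 : #|S|%:R * g = \sum_(w in S) g by rewrite sumr_const mulr_natl.
have e2 : #|D|%:R * c = \sum_(v in D) c by rewrite sumr_const mulr_natl.
rewrite e1 e2.
apply: (le_trans (ler_sum _ hg)).
under eq_bigr => w _ do rewrite (@card_as_sum R _ D _ (hD w)).
apply: (le_trans (y := \sum_w \sum_(v in D) ((B w v)%:R : R))).
  rewrite [X in _ <= X](bigID (fun w => w \in S)) /= lerDl.
  by apply: sumr_ge0 => w _; apply: sumr_ge0 => v _; rewrite ler0n.
rewrite exchange_big /=; apply: ler_sum => v vD.
apply: le_trans (hc v); rewrite (@card_as_sum R _ setT (fun w => B w v)); last by move=> *; rewrite inE.
by rewrite le_eqVlt; apply/orP; left; apply/eqP; rewrite [RHS]big_mkcond /=; apply: eq_bigr => w _; rewrite inE.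
Qed.

Lemma Fbound1 (R : numDomainType) (mu : R) (T : finType) (e : rel T)
  (F : T -> T -> T -> bool) :
  0 <= mu -> incompat_system e F -> Delta_bounded e F (mu * #|T|%:R) ->
  forall v x, (#|[set y | F v x y]|%:R : R) <= mu * #|T|%:R.
Proof.
move=> mu0 [HF Fs] Hb v x.
case: (boolP (e v x)) => h; first exact: Hb.
have -> : [set y | F v x y] = set0.
  apply/setP => y; rewrite !inE; apply/negbTE/negP => /HF /and3P[h' _ _].
  by rewrite h' in h.
by rewrite cards0 mulr_ge0.
Qed.

Lemma Fbound2 (R : numDomainType) (mu : R) (T : finType) (e : rel T)
  (F : T -> T -> T -> bool) :
  0 <= mu -> incompat_system e F -> Delta_bounded e F (mu * #|T|%:R) ->
  forall v y, (#|[set w | F v w y]|%:R : R) <= mu * #|T|%:R.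
Proof.
move=> mu0 HI Hb v y.
have -> : [set w | F v w y] = [set w | F v y w].
  by apply/setP => w; rewrite !inE HI.2.
exact: (Fbound1 mu0 HI Hb).
Qed.

Lemma bound2 (R : numDomainType) (mu : R) (T : finType) (e : rel T)
  (F : T -> T -> T -> bool) (P : pred T) (y1 y2 : T) v :
  0 <= mu -> incompat_system e F -> Delta_bounded e F (mu * #|T|%:R) ->
  (forall w, P w -> F v w y1 || F v w y2) ->
  (#|[set w | P w]|%:R : R) <= mu * #|T|%:R + mu * #|T|%:R.
Proof.
move=> mu0 HI Hb HP.
have sub : [set w | P w] \subset [set w | F v w y1] :|: [set w | F v w y2].
  apply/subsetP => w; rewrite !inE; exact: HP.
apply: le_trans (_ : ((#|[set w | F v w y1]| + #|[set w | F v w y2]|)%N%:R : R) <= _).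
  rewrite ler_nat; apply: leq_trans (subset_leq_card sub) _; exact: leq_card_setU.
by rewrite natrD lerD // (Fbound2 mu0 HI Hb).
Qed.

Lemma arith1 (R : realFieldType) (s k p n : R) :
  0 < s -> 0 < p -> k * (2 * s * p) <= p * (s * s * n + s * s * n) -> k <= s * n.
Proof.
move=> s0 p0 h.
have hp : 0 < 2 * s * p by rewrite !mulr_gt0.
rewrite -(ler_pM2r hp).
have -> : s * n * (2 * s * p) = p * (s * s * n + s * s * n) by ring.
exact: h.
Qed.

Unset Implicit Arguments.

Theorem proposition2p4 (R : rcfType) (mu : R) (T : finType) (e : rel T)
  (F : T -> T -> T -> bool) :
  0 < mu -> simple_graph e -> incompat_system e F ->
  Delta_bounded e F (mu * #|T|%:R) ->
  [/\ (forall P : seq T, is_gpath e P ->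
         #|[set w | path_gamma_bad e F (2 * Num.sqrt mu) P w]|%:R
           <= Num.sqrt mu * #|T|%:R),
      (forall C : seq T, is_gcycle e C ->
         #|[set w | cycle_gamma_bad e F (2 * Num.sqrt mu) C w]|%:R
           <= Num.sqrt mu * #|T|%:R) &
      (forall v : T,
         #|[set u | gamma_correlated e F (Num.sqrt mu) v u]|%:R
           <= Num.sqrt mu * #|T|%:R)].
Proof.
move=> mu0 sg HI Hb.
have s0 : 0 < Num.sqrt mu by rewrite sqrtr_gt0.
have ss : Num.sqrt mu * Num.sqrt mu = mu by rewrite -expr2 sqr_sqrtr // ltW.
have mu0' : 0 <= mu by exact: ltW.
split.
- move=> P [Pn Pu Ps].
  have h : #|[set w | path_gamma_bad e F (2 * Num.sqrt mu) P w]|%:R * (2 * Num.sqrt mu * (size P)%:R) <= #|[set v in P]|%:R * (mu * #|T|%:R + mu * #|T|%:R).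
    apply: (@double_count R T [set w | path_gamma_bad e F (2 * Num.sqrt mu) P w] [set v in P] (fun w v => path_bad_nb e F P w v) (2 * Num.sqrt mu * (size P)%:R) (mu * #|T|%:R + mu * #|T|%:R)).
  + by move=> w v /and3P[h _ _]; rewrite inE.
  + move=> v; apply: (bound2 (y1 := nth v P (index v P).-1) (y2 := nth v P (index v P).+1) (v := v) mu0' HI Hb).
    by move=> w /and3P[_ _ /orP[/andP[_ h]|/andP[_ h]]]; rewrite h ?orbT.
  + by move=> w; rewrite inE.
  have Pc : #|P| = size P by apply/card_uniqP.
  have Pc2 : #|[set v in P]| = size P by rewrite cardsE.
  move: h; rewrite Pc2 => h; apply: (arith1 (p := (size P)%:R) s0); last by rewrite ss.
  by rewrite ltr0n lt0n size_eq0.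
- move=> C [Cn Cu Cs].
  have h : #|[set w | cycle_gamma_bad e F (2 * Num.sqrt mu) C w]|%:R * (2 * Num.sqrt mu * (size C)%:R) <= #|[set v in C]|%:R * (mu * #|T|%:R + mu * #|T|%:R).
    apply: (@double_count R T [set w | cycle_gamma_bad e F (2 * Num.sqrt mu) C w] [set v in C] (fun w v => cycle_bad_nb e F C w v) (2 * Num.sqrt mu * (size C)%:R) (mu * #|T|%:R + mu * #|T|%:R)).
  + by move=> w v /and3P[h _ _]; rewrite inE.
  + move=> v; apply: (bound2 (y1 := prev C v) (y2 := next C v) (v := v) mu0' HI Hb).
    by move=> w /and3P[_ _ h].
  + by move=> w; rewrite inE.
  have Cc : #|C| = size C by apply/card_uniqP.
  have Cc2 : #|[set v in C]| = size C by rewrite cardsE.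
  move: h; rewrite Cc2 => h; apply: (arith1 (p := (size C)%:R) s0) ; last by rewrite ss.
  by rewrite ltr0n; apply: leq_trans Cn.
- move=> v.
  have h : #|[set u | gamma_correlated e F (Num.sqrt mu) v u]|%:R * (Num.sqrt mu * #|T|%:R) <= #|[set: T]|%:R * (mu * #|T|%:R).
    apply: (@double_count R T [set u | gamma_correlated e F (Num.sqrt mu) v u] [set: T] (fun u w => [&& e v w, e u w & F w v u]) (Num.sqrt mu * #|T|%:R) (mu * #|T|%:R)).
  + by move=> *; rewrite inE.
  + move=> w; apply: le_trans (Fbound1 mu0' HI Hb w v).
    rewrite ler_nat; apply: subset_leq_card; apply/subsetP => u.
    by rewrite !inE => /and3P[_ _ ->].
  + by move=> u; rewrite inE.
  move: h; rewrite cardsT => h.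
  have [n0|npos] := posnP #|T|.
    have : (#|[set u | gamma_correlated e F (Num.sqrt mu) v u]| <= #|T|)%N by rewrite -cardsT; apply: subset_leq_card; apply: subsetT.
    by rewrite n0 leqn0 => /eqP ->; rewrite mulr0.
  have hp : 0 < Num.sqrt mu * #|T|%:R by rewrite mulr_gt0 // ltr0n.
  rewrite -(ler_pM2r hp).
  apply: le_trans h _.
  set s := Num.sqrt mu; rewrite -ss.
  rewrite /s le_eqVlt; apply/orP; left; apply/eqP; ring.
Qed.
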